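(* If $v_0=v^*$, then $$\eta\sum_{i=1}^n\langle\phi(x_i),P\widehat v_{i-1}\rangle^2\le 100\cdot\alpha^2\cdot\log^2 n\cdot\log\|v_n\|_2.$$
   Context: Setting: $\phi(x_1),\dots,\phi(x_n)\in\mathbb{R}^d$ are feature vectors of samples $x_1,\dots,x_n$; $\eta\in(0,0.1)$; $\beta\ge\alpha>0$; $v^*\in\mathbb{R}^d$ satisfies $\|v^*\|_2=1$, $\eta\sum_{i=1}^n\langle v^*,\phi(x_i)\rangle^2=\beta$, and $\eta\sum_{i=1}^n\langle w,\phi(x_i)\rangle^2\le\alpha$ for every $w$ with $\|w\|_2\le1$ and $\langle w,v^*\rangle=0$. $P=I-v^*(v^* )^\top$. The iterates are $v_i=v_{i-1}+\eta\langle\phi(x_i),v_{i-1}\rangle\phi(x_i)$ for $i\in[n]$, and $\widehat v_i=v_i/\|v_i\|_2$. *)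

(* Defs.v *)
From HB Require Import structures.
From mathcomp Require Import all_boot all_order all_algebra.
From mathcomp Require Import all_classical all_reals all_analysis.
Set Implicit Arguments. Unset Strict Implicit. Unset Printing Implicit Defensive.
Import Order.TTheory GRing.Theory Num.Theory.
Local Open Scope ring_scope.

Definition dotp {R : realType} {d : nat} (u v : 'rV[R]_d) : R :=
  \sum_(j < d) u 0 j * v 0 j.

Definition norm2 {R : realType} {d : nat} (u : 'rV[R]_d) : R :=
  Num.sqrt (dotp u u).

(* P w = (I - v* v*^T) w *)
Definition projP {R : realType} {d : nat} (vs w : 'rV[R]_d) : 'rV[R]_d :=
  w - dotp vs w *: vs.

(* Oja-type iterates: v_0 = v0, v_i = v_{i-1} + eta <phi(x_i), v_{i-1}> phi(x_i).
   feature i = phi(x_i) for i = 1..n (index 0 unused). *)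
Fixpoint iterate {R : realType} {d : nat} (eta : R) (feature : nat -> 'rV[R]_d)
    (v0 : 'rV[R]_d) (i : nat) : 'rV[R]_d :=
  match i with
  | 0 => v0
  | k.+1 => let vk := iterate eta feature v0 k in
            vk + (eta * dotp (feature k.+1) vk) *: feature k.+1
  end.

Definition normalize {R : realType} {d : nat} (v : 'rV[R]_d) : 'rV[R]_d :=
  (norm2 v)^-1 *: v.

(* Main.v *)
Require Import Defs.
From HB Require Import structures.
From mathcomp Require Import all_boot all_order all_algebra.
From mathcomp Require Import all_classical all_reals all_analysis.
From mathcomp Require Import ring lra zify.
Import Order.TTheory GRing.Theory Num.Theory.
Local Open Scope ring_scope.

Section Dot.
Context {R : realType} {d : nat}.
Implicit Types (u v w : 'rV[R]_d).

Lemma dotpC u v : dotp u v = dotp v u.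
Proof. by rewrite /dotp; apply: eq_bigr => j _; rewrite mulrC. Qed.

Lemma dotpDr u v w : dotp u (v + w) = dotp u v + dotp u w.
Proof. by rewrite /dotp -big_split; apply: eq_bigr => j _; rewrite !mxE mulrDr. Qed.

Lemma dotpZr u v (c : R) : dotp u (c *: v) = c * dotp u v.
Proof. by rewrite /dotp mulr_sumr; apply: eq_bigr => j _; rewrite !mxE mulrCA. Qed.

Lemma dotpNr u v : dotp u (- v) = - dotp u v.
Proof. by rewrite /dotp -sumrN; apply: eq_bigr => j _; rewrite !mxE mulrN. Qed.

Lemma dotpBr u v w : dotp u (v - w) = dotp u v - dotp u w.
Proof. by rewrite dotpDr dotpNr. Qed.

Lemma dotp0r u : dotp u 0 = 0.
Proof. by rewrite /dotp big1 // => j _; rewrite mxE mulr0. Qed.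

Lemma dotpDl u v w : dotp (v + w) u = dotp v u + dotp w u.
Proof. by rewrite dotpC dotpDr !(dotpC u). Qed.

Lemma dotpZl u v (c : R) : dotp (c *: v) u = c * dotp v u.
Proof. by rewrite dotpC dotpZr dotpC. Qed.

Lemma dotp_sumr u (r : seq nat) (P : pred nat) (F : nat -> 'rV[R]_d) :
  dotp u (\sum_(j <- r | P j) F j) = \sum_(j <- r | P j) dotp u (F j).
Proof. by apply: (big_morph (dotp u)); [exact: dotpDr | exact: dotp0r]. Qed.

Lemma dotp_ge0 u : 0 <= dotp u u.
Proof. by apply: sumr_ge0 => j _; rewrite -expr2 sqr_ge0. Qed.

Lemma dotp_eq0 u : dotp u u = 0 -> u = 0.
Proof.
move=> /eqP; rewrite /dotp psumr_eq0 => [/allP H|j _]; last by rewrite -expr2 sqr_ge0.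
apply/matrixP => i j; rewrite (ord1 i) mxE.
have := H j (mem_index_enum j); rewrite -expr2 sqrf_eq0 => /eqP ->//.
Qed.

Lemma norm2_sq u : norm2 u ^+ 2 = dotp u u.
Proof. by rewrite /norm2 sqr_sqrtr // dotp_ge0. Qed.

End Dot.

Section Main.
Variables (R : realType) (d n : nat) (phi : nat -> 'rV[R]_d) (eta A : R) (vs : 'rV[R]_d).
Hypothesis Heta : 0 < eta.
Hypothesis HA : 0 < A.
Hypothesis Hvs : dotp vs vs = 1.
Hypothesis HZ : forall Z : 'rV[R]_d, dotp Z vs = 0 ->
  \sum_(1 <= i < n.+1) dotp Z (phi i) ^+ 2 <= A * dotp Z Z.

Let v := iterate eta phi vs.
Let rho j := norm2 (v j).
Let s j := eta * dotp (phi j) (v j.-1).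
Let u j := projP vs (phi j).
Let Zs a i := \sum_(a <= j < i) s j *: u j.

Lemma u_vs j : dotp (u j) vs = 0.
Proof. by rewrite /u /projP dotpC dotpBr dotpZr Hvs mulr1 dotpC subrr. Qed.

Lemma orth_phi Z j : dotp Z vs = 0 -> dotp Z (u j) = dotp Z (phi j).
Proof. by move=> HZv; rewrite /u /projP dotpBr dotpZr HZv mulr0 subr0. Qed.

Lemma Zs_vs a i : dotp (Zs a i) vs = 0.
Proof.
rewrite /Zs dotpC dotp_sumr big1 // => j _.
by rewrite dotpZr dotpC u_vs mulr0.
Qed.

Lemma sub_range (f : nat -> R) a b : (1 <= a)%N -> (a <= b)%N -> (b <= n.+1)%N ->
  (forall i, 0 <= f i) ->
  \sum_(a <= i < b) f i <= \sum_(1 <= i < n.+1) f i.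
Proof.
move=> h1 h2 h3 hf.
rewrite (big_cat_nat h1 (leq_trans h2 h3)) /= (big_cat_nat h2 h3) /=.
have p1 : 0 <= \sum_(1 <= i < a) f i by apply: sumr_ge0.
have p2 : 0 <= \sum_(b <= i < n.+1) f i by apply: sumr_ge0.
lra.
Qed.

Lemma ZZ_bound a m : (1 <= a)%N -> (a <= m)%N -> (m <= n.+1)%N ->
  dotp (Zs a m) (Zs a m) <= A * \sum_(a <= j < m) s j ^+ 2.
Proof.
move=> h1 h2 h3.
set Z := Zs a m.
have E : dotp Z Z = \sum_(a <= j < m) s j * dotp Z (phi j).
  rewrite {2}/Z /Zs dotp_sumr; apply: eq_bigr => j _.
  by rewrite dotpZr orth_phi // Zs_vs.
have H1 : 2 * A * dotp Z Z <= A ^+ 2 * \sum_(a <= j < m) s j ^+ 2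
     + \sum_(a <= j < m) dotp Z (phi j) ^+ 2.
  rewrite E mulr_sumr mulr_sumr -big_split /=; apply: ler_sum => j _.
  have := sqr_ge0 (A * s j - dotp Z (phi j)); lra.
have H2 : \sum_(a <= j < m) dotp Z (phi j) ^+ 2 <= A * dotp Z Z.
  have HH := HZ _ (Zs_vs a m). rewrite -/Z in HH. apply: le_trans HH.
  by apply: sub_range => // i; apply: sqr_ge0.
have H3 : A * dotp Z Z <= A * (A * \sum_(a <= j < m) s j ^+ 2).
  rewrite mulrA -expr2; lra.
by rewrite ler_pM2l in H3.
Qed.

Lemma v_succ j : v j.+1 = v j + s j.+1 *: phi j.+1.
Proof. by []. Qed.

Lemma dotp_step j : dotp (v j.+1) (v j.+1) = dotp (v j) (v j)
  + 2 * eta * dotp (phi j.+1) (v j) ^+ 2 + s j.+1 ^+ 2 * dotp (phi j.+1) (phi j.+1).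
Proof.
rewrite v_succ dotpDl !dotpDr !dotpZr !dotpZl /s /= (dotpC (v j)).
rewrite !expr2; lra.
Qed.

Lemma s_step j : s j.+1 ^+ 2 <= eta * (rho j.+1 ^+ 2 - rho j ^+ 2) / 2.
Proof.
rewrite /rho !norm2_sq dotp_step.
have -> : s j.+1 ^+ 2 = eta * (eta * dotp (phi j.+1) (v j) ^+ 2).
  by rewrite /s /= exprMn expr2 mulrA.
have h2 : 0 <= eta * dotp (phi j.+1) (v j) ^+ 2 by rewrite mulr_ge0 ?sqr_ge0 // ltW.
rewrite -[2 * eta * _]mulrA.
set w := eta * dotp (phi j.+1) (v j) ^+ 2 in h2 *.
have hP := dotp_ge0 (phi j.+1).
set P := dotp (phi j.+1) (phi j.+1) in hP *.
have hE := ltW Heta.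
have h4 : 0 <= eta * (eta * w * P) by do 3 (apply: mulr_ge0 => //).
lra.
Qed.

Lemma rho_le_succ j : rho j <= rho j.+1.
Proof.
rewrite /rho /norm2 ler_sqrt; last by rewrite dotp_ge0.
rewrite dotp_step.
have h1 : 0 <= s j.+1 ^+ 2 * dotp (phi j.+1) (phi j.+1).
  by rewrite mulr_ge0 ?sqr_ge0 ?dotp_ge0.
have h2 : 0 <= 2 * eta * dotp (phi j.+1) (v j) ^+ 2.
  by rewrite mulr_ge0 ?sqr_ge0 // mulr_ge0 // ltW.
lra.
Qed.

Lemma rho_mono p q : (p <= q)%N -> rho p <= rho q.
Proof.
move=> /subnKC <-; elim: (q - p)%N => [|k IH]; first by rewrite addn0.
by rewrite addnS; apply: (le_trans IH); apply: rho_le_succ.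
Qed.

Lemma rho0 : rho 0 = 1.
Proof. by rewrite /rho /norm2 /= Hvs sqrtr1. Qed.

Lemma rho_ge1 j : 1 <= rho j.
Proof. by rewrite -rho0; apply: rho_mono. Qed.

Lemma rho_gt0 j : 0 < rho j.
Proof. by apply: (lt_le_trans ltr01); apply: rho_ge1. Qed.

Lemma block_bound a m b : (1 <= a)%N -> (a <= m)%N -> (m <= b)%N -> (b <= n.+1)%N ->
  \sum_(m <= i < b) (dotp (phi i) (Zs a m) / rho i.-1) ^+ 2
    <= A ^+ 2 * \sum_(a <= j < m) (s j / rho j) ^+ 2.
Proof.
move=> h1 h2 h3 h4.
have hm : (1 <= m)%N by apply: leq_trans h2.
have hr : forall j, (rho j)^-1 \is Num.nneg.
  by move=> j; rewrite nnegrE invr_ge0; apply: ltW; apply: rho_gt0.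
set r0 := rho m.-1.
have r0p : 0 < r0 by apply: rho_gt0.
have S1 : \sum_(m <= i < b) (dotp (phi i) (Zs a m) / rho i.-1) ^+ 2
   <= \sum_(m <= i < b) dotp (Zs a m) (phi i) ^+ 2 * r0^-2.
  rewrite big_nat_cond [X in _ <= X]big_nat_cond; apply: ler_sum => i /andP[/andP[hi _] _].
  rewrite dotpC exprMn; apply: ler_wpM2l; first exact: sqr_ge0.
  rewrite -exprVn; apply: lerXn2r; rewrite ?hr //.
  rewrite lef_pV2 ?posrE ?rho_gt0 //; apply: rho_mono.
  by rewrite -!subn1 leq_sub2r.
apply: (le_trans S1); rewrite -mulr_suml.
have S2 : \sum_(m <= i < b) dotp (Zs a m) (phi i) ^+ 2 <= A * (A * \sum_(a <= j < m) s j ^+ 2).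
  apply: le_trans (_ : A * dotp (Zs a m) (Zs a m) <= _); last first.
    by rewrite ler_pM2l //; apply: ZZ_bound => //; apply: leq_trans h4.
  apply: le_trans; last exact: (HZ _ (Zs_vs a m)).
  by apply: sub_range => // i; apply: sqr_ge0.
have r0i : 0 <= r0 ^- 2 by rewrite invr_ge0; apply: exprn_ge0; apply: ltW.
apply: (le_trans (ler_wpM2r r0i S2)).
rewrite mulrA -expr2 -mulrA; apply: ler_wpM2l; first exact: sqr_ge0.
rewrite mulr_suml big_nat_cond [X in _ <= X]big_nat_cond; apply: ler_sum => j /andP[/andP[_ hj] _].
rewrite [X in _ <= X]exprMn; apply: ler_wpM2l; first exact: sqr_ge0.
rewrite -!exprVn; apply: lerXn2r; rewrite ?hr //.
rewrite lef_pV2 ?posrE ?rho_gt0 //; apply: rho_mono.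
by rewrite -subn1 leq_subRL // addnC addn1.
Qed.

Let T a i := dotp (phi i) (Zs a i) / rho i.-1.

Lemma sum_sq_ge0 a b : 0 <= \sum_(a <= j < b) (s j / rho j) ^+ 2.
Proof. by apply: sumr_ge0 => j _; apply: sqr_ge0. Qed.

Lemma claim k : forall a b, (1 <= a)%N -> (a <= b)%N -> (b <= n.+1)%N ->
  (b - a <= 2 ^ k)%N ->
  \sum_(a <= i < b) T a i ^+ 2 <= A ^+ 2 * (k.+1)%:R ^+ 2 * \sum_(a <= j < b) (s j / rho j) ^+ 2.
Proof.
have hR : forall (x : R) a b, 0 <= A ^+ 2 * x ^+ 2 * \sum_(a <= j < b) (s j / rho j) ^+ 2.
  by move=> x a b; rewrite mulr_ge0 ?sum_sq_ge0 // mulr_ge0 // sqr_ge0.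
elim: k => [|k IH] a b h1 h2 h3 h4.
  rewrite expn0 in h4.
  have [->|->] : b = a \/ b = a.+1 by lia.
    by rewrite big_geq.
  by rewrite big_nat1 /T /Zs big_geq // dotp0r mul0r expr0n /=.
set m := minn b (a + 2 ^ k).
have ham : (a <= m)%N by rewrite /m; lia.
have hmb : (m <= b)%N by rewrite /m; lia.
have hma : (m - a <= 2 ^ k)%N by rewrite /m; lia.
have hbm : (b - m <= 2 ^ k)%N by rewrite /m; rewrite expnS in h4; lia.
have h1m : (1 <= m)%N by apply: leq_trans ham.
have hmn : (m <= n.+1)%N by apply: leq_trans h3.
rewrite (big_cat_nat ham hmb) /= [X in _ <= _ * X](big_cat_nat ham hmb) /=.
set SL := \sum_(a <= i < m) T a i ^+ 2.
set TL := \sum_(a <= j < m) (s j / rho j) ^+ 2.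
set TR := \sum_(m <= j < b) (s j / rho j) ^+ 2.
set SR := \sum_(m <= i < b) T a i ^+ 2.
set K : R := (k.+1)%:R.
have hK : 1 <= K by rewrite /K ler1n.
have -> : (k.+2)%:R = K + 1 by rewrite /K -[k.+2]addn1 natrD.
have hSL : SL <= A ^+ 2 * K ^+ 2 * TL by apply: IH.
set Y := fun i => dotp (phi i) (Zs a m) / rho i.-1.
have hSX : \sum_(m <= i < b) T m i ^+ 2 <= A ^+ 2 * K ^+ 2 * TR by apply: IH.
have hSY : \sum_(m <= i < b) Y i ^+ 2 <= A ^+ 2 * TL by apply: block_bound.
have hSR : K * SR <= (K + 1) * \sum_(m <= i < b) T m i ^+ 2 + K * (K + 1) * \sum_(m <= i < b) Y i ^+ 2.
  rewrite /SR !mulr_sumr -big_split /= big_nat_cond [X in _ <= X]big_nat_cond.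
  apply: ler_sum => i /andP[/andP[hi _] _].
  have -> : T a i = Y i + T m i.
    rewrite /T /Y /Zs (big_cat_nat ham hi) /= dotpDr mulrDl //.
  have := sqr_ge0 (T m i - K * Y i); lra.
have hTL := sum_sq_ge0 a m. have hTR := sum_sq_ge0 m b.
have hSX0 : 0 <= \sum_(m <= i < b) T m i ^+ 2 by apply: sumr_ge0 => i _; apply: sqr_ge0.
have hSR' : K * SR <= K * ((K + 1) * K * A ^+ 2 * TR + (K + 1) * A ^+ 2 * TL).
  apply: (le_trans hSR).
  have e1 : (K + 1) * \sum_(m <= i < b) T m i ^+ 2 <= (K + 1) * (A ^+ 2 * K ^+ 2 * TR).
    by rewrite ler_pM2l //; lra.
  have e2 : K * (K + 1) * \sum_(m <= i < b) Y i ^+ 2 <= K * (K + 1) * (A ^+ 2 * TL).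
    rewrite ler_pM2l //; apply: mulr_gt0; lra.
  apply: le_trans (lerD e1 e2) _; rewrite le_eqVlt; apply/orP; left; apply/eqP; ring.
rewrite ler_pM2l in hSR'; last by lra.
set B := A ^+ 2 in hSL hSR' *.
have hB : 0 <= B by apply: sqr_ge0.
have q1 : 0 <= B * TL * K by apply: mulr_ge0; [apply: mulr_ge0 | lra].
have q2 : 0 <= B * TR * K by apply: mulr_ge0; [apply: mulr_ge0 | lra].
have q3 : 0 <= B * TR by apply: mulr_ge0.
lra.
Qed.

Lemma projP_lin x y c : projP vs (x + c *: y) = projP vs x + c *: projP vs y.
Proof. by rewrite /projP dotpDr dotpZr; apply/matrixP => i j; rewrite !mxE; ring. Qed.

Lemma projPZ c x : projP vs (c *: x) = c *: projP vs x.
Proof. by rewrite /projP dotpZr scalerBr scalerA. Qed.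

Lemma proj_v m : projP vs (v m) = Zs 1 m.+1.
Proof.
elim: m => [|m IH].
  by rewrite /Zs big_geq // /v /= /projP Hvs scale1r subrr.
rewrite v_succ projP_lin IH /Zs [X in _ = X]big_nat_recr //.
Qed.

Lemma T_eq i : (1 <= i)%N ->
  dotp (phi i) (projP vs (normalize (v i.-1))) = T 1 i.
Proof.
move=> hi; rewrite /normalize projPZ dotpZr proj_v prednK // /T mulrC; reflexivity.
Qed.

Lemma log_step j : (s j.+1 / rho j.+1) ^+ 2 <= eta * (ln (rho j.+1) - ln (rho j)).
Proof.
have hs := s_step j.
have p0 := rho_gt0 j. have p1 := rho_gt0 j.+1.
set r0 := rho j in hs p0 *. set r1 := rho j.+1 in hs p1 *.
set q := r1^-1.
have hq : r1 * q = 1 by rewrite /q mulfV // gt_eqF.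
have qp : 0 < q by rewrite /q invr_gt0.
set y := (r0 * q) ^+ 2.
have yp : 0 < y by rewrite /y exprn_gt0 // mulr_gt0.
have hl : ln y <= y - 1.
  have := @le_ln1Dx R (y - 1); rewrite addrCA subrr addr0; apply; lra.
have hly : ln y = 2 * (ln r0 - ln r1).
  rewrite /y lnXn ?mulr_gt0 // lnM ?posrE // /q lnV ?posrE // mulr_natl //.
have e1 : (s j.+1 / r1) ^+ 2 <= eta * (r1 ^+ 2 - r0 ^+ 2) / 2 * q ^+ 2.
  by rewrite exprMn; apply: ler_wpM2r; [apply: sqr_ge0 | exact: hs].
have e2 : eta * (r1 ^+ 2 - r0 ^+ 2) / 2 * q ^+ 2 = eta / 2 * (1 - y).
  by rewrite /y /q; field; rewrite gt_eqF.
apply: (le_trans e1); rewrite e2.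
have : 1 - y <= 2 * (ln r1 - ln r0) by lra.
move=> h; have : eta / 2 * (1 - y) <= eta / 2 * (2 * (ln r1 - ln r0)).
  by rewrite ler_pM2l // divr_gt0.
move=> h2; apply: (le_trans h2); rewrite le_eqVlt; apply/orP; left; apply/eqP.
rewrite mulrA -[eta / 2 * 2]mulrA mulVf ?mulr1 //.
Qed.

Lemma sum_log : \sum_(1 <= j < n.+1) (s j / rho j) ^+ 2 <= eta * ln (rho n).
Proof.
rewrite big_add1 /=.
apply: le_trans (_ : \sum_(0 <= j < n) eta * (ln (rho j.+1) - ln (rho j)) <= _).
  by apply: ler_sum => j _; apply: log_step.
by rewrite -mulr_sumr telescope_sumr // rho0 ln1 subr0.
Qed.

Lemma main_bound k : (n <= 2 ^ k)%N ->
  eta * (\sum_(1 <= i < n.+1) dotp (phi i) (projP vs (normalize (v i.-1))) ^+ 2)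
  <= eta * (A ^+ 2 * (k.+1)%:R ^+ 2 * (eta * ln (rho n))).
Proof.
move=> hk; rewrite ler_pM2l //.
rewrite big_nat_cond (eq_bigr (fun i => T 1 i ^+ 2)); last first.
  by move=> i /andP[/andP[hi _] _]; rewrite T_eq.
rewrite -big_nat_cond.
have hc : (n.+1 - 1 <= 2 ^ k)%N by rewrite subSS subn0.
apply: le_trans (claim k 1 n.+1 (leqnn 1) (ltn0Sn n) (leqnn _) hc) _.
apply: ler_wpM2l; last exact: sum_log.
by rewrite mulr_ge0 // sqr_ge0.
Qed.

Lemma ln2_ge : 1 / 2 <= ln (2 : R).
Proof.
have h := @le_ln1Dx R (- (1 / 2)).
have e : 1 + - (1 / 2) = (2 : R)^-1 by field.
rewrite e lnV ?posrE // in h; lra.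
Qed.

Lemma final_bound :
  eta * (\sum_(1 <= i < n.+1) dotp (phi i) (projP vs (normalize (v i.-1))) ^+ 2)
  <= 100 * (eta * A) ^+ 2 * (ln (n%:R : R)) ^+ 2 * ln (rho n).
Proof.
have hL : 0 <= ln (rho n) by apply: ln_ge0; apply: rho_ge1.
case: (ltnP n 2) => hn.
  have [hn0|hn0] : n = 0%N \/ n = 1%N by lia.
  - rewrite hn0 big_geq // mulr0.
    by rewrite /rho /v /= /norm2 Hvs sqrtr1 ln1 mulr0.
  - rewrite hn0 big_nat1 /= /normalize /norm2 Hvs sqrtr1 invr1 scale1r /projP Hvs scale1r subrr.
    by rewrite dotp0r expr0n /= mulr0 ln1 expr0n /= mulr0 mul0r.
have hn2 : (2 <= n)%N := hn.
set N := n.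
set t := trunc_log 2 N.
have hN : (N <= 2 ^ t.+1)%N by apply: ltnW; apply: trunc_log_ltn.
apply: le_trans (main_bound t.+1 hN) _.
have h2 := ln2_ge.
have hN0 : (0 < N)%N by rewrite /N; lia.
have hln2 : ln (2 : R) <= ln (N%:R : R).
  by rewrite ler_ln ?posrE // ?ltr0n // (ler_nat R 2 N).
have hlnt : t%:R * ln (2 : R) <= ln (N%:R : R).
  rewrite mulr_natl -lnXn // ler_ln ?posrE ?exprn_gt0 ?ltr0n //.
  by rewrite -natrX ler_nat; apply: trunc_logP => //; lia.
have ht0 : 0 <= (t%:R : R) by apply: ler0n.
have ht := ler_wpM2l ht0 h2; rewrite mul1r in ht.
have hK : (t.+2)%:R <= 10 * ln (N%:R : R).
  rewrite -[t.+2]addn2 natrD; lra.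
have hK2 : (t.+2)%:R ^+ 2 <= 100 * ln (N%:R : R) ^+ 2.
  have -> : (100 : R) * ln (N%:R : R) ^+ 2 = (10 * ln (N%:R : R)) ^+ 2 by ring.
  apply: lerXn2r => //; rewrite nnegrE //; lra.
have -> : eta * (A ^+ 2 * (t.+2)%:R ^+ 2 * (eta * ln (rho N)))
    = (eta * A) ^+ 2 * ((t.+2)%:R ^+ 2 * ln (rho N)) by ring.
have -> : 100 * (eta * A) ^+ 2 * ln (N%:R : R) ^+ 2 * ln (rho N)
    = (eta * A) ^+ 2 * ((100 * ln (N%:R : R) ^+ 2) * ln (rho N)) by ring.
apply: ler_wpM2l; first exact: sqr_ge0.
by apply: ler_wpM2r.
Qed.

End Main.

Theorem lemmaC5 (R : realType) (d n : nat) (feature : nat -> 'rV[R]_d)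
    (eta alpha beta : R) (vstar : 'rV[R]_d) :
  0 < eta -> eta < 1 / 10 ->
  0 < alpha -> alpha <= beta ->
  norm2 vstar = 1 ->
  eta * (\sum_(1 <= i < n.+1) dotp vstar (feature i) ^+ 2) = beta ->
  (forall w : 'rV[R]_d, norm2 w <= 1 -> dotp w vstar = 0 ->
     eta * (\sum_(1 <= i < n.+1) dotp w (feature i) ^+ 2) <= alpha) ->
  let v := iterate eta feature vstar in
  eta * (\sum_(1 <= i < n.+1)
           dotp (feature i) (projP vstar (normalize (v i.-1))) ^+ 2)
  <= 100 * alpha ^+ 2 * (ln (n%:R : R)) ^+ 2 * ln (norm2 (v n)).
Proof.
move=> Heta _ Hal _ Hvs1 _ H.
have Hvs : dotp vstar vstar = 1 by rewrite -norm2_sq Hvs1 expr1n.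
set A := alpha / eta.
have HA : 0 < A by rewrite /A divr_gt0.
have HZ : forall Z : 'rV[R]_d, dotp Z vstar = 0 ->
    \sum_(1 <= i < n.+1) dotp Z (feature i) ^+ 2 <= A * dotp Z Z.
  move=> Z HZv.
  have [Z0|Zn0] := eqVneq (dotp Z Z) 0.
    have -> := dotp_eq0 Z Z0.
    rewrite dotp0r mulr0 big1 // => i _.
    by rewrite dotpC dotp0r expr0n.
  have Np : 0 < dotp Z Z by rewrite lt_neqAle eq_sym Zn0 dotp_ge0.
  set N := dotp Z Z in Np Zn0 *.
  set c := (Num.sqrt N)^-1.
  have c2 : c ^+ 2 = N^-1 by rewrite /c exprVn sqr_sqrtr // ltW.
  have hw := H (c *: Z).
  have hnw : norm2 (c *: Z) <= 1.
    by rewrite /norm2 dotpZl dotpZr mulrA -expr2 c2 mulVf // sqrtr1.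
  have hwv : dotp (c *: Z) vstar = 0 by rewrite dotpZl HZv mulr0.
  have := hw hnw hwv.
  under eq_bigr => i _ do rewrite dotpZl exprMn.
  rewrite -mulr_sumr c2 => h.
  set S := \sum_(1 <= i < n.+1) dotp Z (feature i) ^+ 2 in h *.
  have -> : S = eta * (N^-1 * S) * (N / eta) by field; rewrite ?gt_eqF.
  have hNe : 0 <= N / eta by rewrite divr_ge0 // ltW.
  apply: (le_trans (ler_wpM2r hNe h)).
  rewrite le_eqVlt; apply/orP; left; apply/eqP; rewrite /A; field.
  by rewrite gt_eqF.
have := @final_bound R d n feature eta A vstar Heta HA Hvs HZ.
have -> : eta * A = alpha by rewrite /A mulrC -mulrA mulVf ?mulr1 // gt_eqF.
exact.
Qed.
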